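(* For every $n\ge 1$, every doubly stochastic $n\times n$ matrix $\mathcal M$ and every $\kappa\le\frac{n}{2n-1}$, there exists a directed $(2n-1)$-regular multigraph $G$ on $[n]$ whose throughput with respect to $\mathcal M$ is at least $\kappa$.
   Context: Let $n\ge 1$ and $[n]=\{1,\dots,n\}$. Networks are finite directed multigraphs on vertex set $[n]$; self-loops and parallel arcs are allowed. A directed multigraph is directed $r$-regular if every vertex has exactly $r$ outgoing and exactly $r$ incoming arcs (a self-loop at $v$ counts as one outgoing and one incoming arc of $v$). A path is a non-empty sequence of arcs $((u_1,v_1),\dots,(u_\ell,v_\ell))$ with $v_i=u_{i+1}$ for $i<\ell$; it goes from $u_1$ to $v_\ell$ and has length $\ell\ge 1$. An $n\times n$ matrix is doubly stochastic if all entries are nonnegative and every row and every column sums to $1$. In a directed $(2n-1)$-regular multigraph $G$ on $[n]$ every arc has capacity $\frac{1}{2n-1}$. $G$ hosts a nonnegative $n\times n$ matrix $\mathcal M=(a_{i,j})$ if there is a finite collection $\{(P_k,d_k)\}$, where each $P_k$ is a path in $G$ from some $s_k$ to some $t_k$ and $d_k\ge 0$, such that $\sum_{k:\,s_k=u,\,t_k=v} d_k=a_{u,v}$ for all $u,v\in[n]$, and for every arc $e$ of $G$ (parallel arcs are distinct) $\sum_{k:\,e\in P_k} d_k\le \frac{1}{2n-1}$. The throughput of $G$ with respect to a doubly stochastic $\mathcal M$ is the largest $\theta$ such that $G$ hosts $\theta\mathcal M$. *)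

(* Defs.v *)
From HB Require Import structures.
From mathcomp Require Import all_boot all_order all_algebra.
From mathcomp Require Import reals.
Set Implicit Arguments. Unset Strict Implicit. Unset Printing Implicit Defensive.
Import Order.TTheory GRing.Theory Num.Theory.
Local Open Scope ring_scope.

(* A finite directed multigraph on vertex set 'I_n ( = [n] shifted by one).
   Arcs are indexed by 'I_(narcs G) (so parallel arcs are distinct objects);
   arc G e = (tail, head). *)
Record mgraph (n : nat) := MGraph {
  narcs : nat;
  arc : 'I_narcs -> 'I_n * 'I_n }.

Arguments narcs {n} m : rename.
Arguments arc {n} m _ : rename.

Definition arc_t n (G : mgraph n) := 'I_(narcs G).

(* directed r-regular: every vertex has exactly r outgoing and r incoming arcs
   (a self-loop counts once in each). *)
Definition dregular n (G : mgraph n) (r : nat) : Prop :=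
  forall v : 'I_n,
    #|[set e : arc_t G | (arc G e).1 == v]| = r /\
    #|[set e : arc_t G | (arc G e).2 == v]| = r.

Definition is_path n (G : mgraph n) (p : seq (arc_t G)) : Prop :=
  p <> [::] /\
  sorted (fun e f : arc_t G => (arc G e).2 == (arc G f).1) p.

Definition path_src n (G : mgraph n) (p : seq (arc_t G)) : option 'I_n :=
  omap (fun e => (arc G e).1) (ohead p).
Definition path_dst n (G : mgraph n) (p : seq (arc_t G)) : option 'I_n :=
  omap (fun e => (arc G e).2) (ohead (rev p)).

Definition doubly_stochastic (R : realType) n (M : 'M[R]_n) : Prop :=
  (forall i j, 0 <= M i j) /\
  (forall i, \sum_j M i j = 1) /\
  (forall j, \sum_i M i j = 1).

Definition hosts_cap (R : realType) n (G : mgraph n) (c : R) (A : 'M[R]_n) : Prop :=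
  exists (fl : seq (seq (arc_t G) * R)),
    (forall k, k \in fl -> is_path k.1 /\ 0 <= k.2) /\
    (forall u v : 'I_n,
        \sum_(k <- fl | (path_src k.1 == Some u) && (path_dst k.1 == Some v)) k.2
        = A u v) /\
    (forall e : arc_t G, \sum_(k <- fl | e \in k.1) k.2 <= c).

(* In a (2n-1)-regular multigraph every arc has capacity 1/(2n-1). *)
Definition hosts (R : realType) n (G : mgraph n) (A : 'M[R]_n) : Prop :=
  hosts_cap G ((2 * n - 1)%N%:R)^-1 A.

Definition is_throughput (R : realType) n (G : mgraph n) (M : 'M[R]_n) (theta : R) : Prop :=
  hosts G (theta *: M) /\ (forall t : R, hosts G (t *: M) -> t <= theta).

(* Main.v *)
Require Import Defs.
From HB Require Import structures.
From mathcomp Require Import all_boot all_order all_algebra.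
From mathcomp Require Import reals.
From mathcomp Require Import all_classical all_reals all_analysis.
From mathcomp Require Import zify ring lra.
Import Defs.
Import numFieldTopology.Exports numFieldNormedType.Exports.
Set Implicit Arguments. Unset Strict Implicit. Unset Printing Implicit Defensive.
Import Order.TTheory GRing.Theory Num.Theory.
Local Open Scope ring_scope.

Lemma reduce_sorted (T : eqType) (r : rel T) (N : nat) : forall x (p : seq T),
  (size p <= N)%N -> sorted r (x :: p) ->
  exists p', [/\ uniq (x :: p'), sorted r (x :: p'), last x p' = last x p &
     {subset x :: p' <= x :: p}].
Proof.
elim: N => [|N IH] x p.
  case: p => // _ _; exists [::]; split=> //.
move=> sz srt.
case xp: (x \in p).
  case/splitPr: xp sz srt => b c sz srt.
  have srtc : sorted r (x :: c).
    by move: srt; rewrite -cat_cons => /cat_sorted2 [].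
  have szc : (size c <= N)%N.
    by move: sz; rewrite size_cat /=; lia.
  have [p' [u s l sub]] := IH x c szc srtc.
  exists p'; split => //.
    by rewrite l last_cat.
  move=> z /sub; rewrite !inE mem_cat !inE => /orP [->//|->]; by rewrite !orbT.
case: p xp sz srt => [|y q] xp sz srt.
  by exists [::]; split.
move: srt => /= /andP [rxy srt].
have szq : (size q <= N)%N by move: sz => /=; lia.
have [q' [u s l sub]] := IH y q szq srt.
exists (y :: q'); split => //=.
- move: u => /= /andP[-> ->]; rewrite !andbT.
  apply/negP => /sub; by rewrite xp.
- by rewrite rxy.
- move=> z; rewrite [z \in _ :: _]inE => /orP [/eqP->|h]; first by rewrite inE eqxx.
  by move/sub: h => h; rewrite inE h orbT.
Qed.

Section PartA.
Variables (R : realType) (n : nat) (G : mgraph n).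

Local Notation A := (arc_t G).

Definition arel : rel A := fun e f => (arc G e).2 == (arc G f).1.

Lemma last_rev_ohead (T : Type) (x : T) (q : seq T) : ohead (rev (x :: q)) = Some (last x q).
Proof. by rewrite lastI rev_rcons. Qed.

Lemma path_reduce (p : seq A) : is_path p -> exists p' : seq A,
  [/\ is_path p', uniq p', path_src p' = path_src p, path_dst p' = path_dst p & {subset p' <= p}].
Proof.
case: p => [[]//|x q [_ srt]].
have [q' [u s l sub]] := @reduce_sorted _ arel (size q) x q (leqnn _) srt.
exists (x :: q'); split => //.
- by rewrite /path_dst !last_rev_ohead l.
Qed.

Definition dem (fl : seq (seq A * R)) (u w : 'I_n) :=
  \sum_(k <- fl | (path_src k.1 == Some u) && (path_dst k.1 == Some w)) k.2.
Definition load (fl : seq (seq A * R)) (e : A) := \sum_(k <- fl | e \in k.1) k.2.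

Lemma flow_reduce (fl : seq (seq A * R)) :
  (forall k, k \in fl -> is_path k.1 /\ 0 <= k.2) ->
  exists fl', [/\ forall k, k \in fl' -> [/\ uniq k.1, is_path k.1 & 0 <= k.2],
     forall u w, dem fl' u w = dem fl u w & forall e, load fl' e <= load fl e].
Proof.
elim: fl => [_|[p d] fl IH H].
  by exists [::]; split => // u w.
have [Hp Hd] := H _ (mem_head _ _).
have [|fl' [H1 H2 H3]] := IH.
  by move=> k kin; apply: H; rewrite inE kin orbT.
have [p' [pp' up' sp' dp' sub]] := path_reduce Hp.
exists ((p', d) :: fl'); split.
- move=> k; rewrite inE => /orP [/eqP->|/H1] //.
- by move=> u w; rewrite /dem !big_cons /= sp' dp' -!/(dem _ _ _) H2.
- move=> e; rewrite /load !big_cons /= -!/(load _ _).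
  case: ifP => ep'; first by rewrite (sub _ ep') lerD2l.
  case: ifP => _ //; apply: (le_trans (H3 e)); by rewrite lerDr.
Qed.

Definition pathb (p : seq A) : bool := (p != [::]) && sorted arel p.

Lemma pathbP p : reflect (is_path p) (pathb p).
Proof. by apply: (iffP andP) => [[/eqP ? ?]|[? ?]]; split => //; apply/eqP. Qed.

Definition allpaths : seq (seq A) :=
  undup [seq p <- flatten [seq [seq tval t | t <- enum {: k.-tuple A}] | k <- iota 0 (narcs G).+1] | pathb p].

Lemma allpaths_uniq : uniq allpaths.
Proof. exact: undup_uniq. Qed.

Lemma allpaths_path p : p \in allpaths -> is_path p.
Proof. by rewrite mem_undup mem_filter => /andP [/pathbP]. Qed.

Lemma allpaths_mem p : is_path p -> uniq p -> p \in allpaths.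
Proof.
move=> /pathbP pp up; rewrite mem_undup mem_filter pp andTb.
apply/flatten_mapP; exists (size p).
  rewrite mem_iota /= add0n ltnS.
  have := max_card (mem p); by rewrite (card_uniqP up) card_ord.
apply/mapP; exists (in_tuple p) => //; by rewrite mem_enum.
Qed.

Variables (M : 'M[R]_n) (c : R).

Local Notation F := allpaths.
Local Notation N := (size allpaths).
Definition P (i : 'I_N) : seq A := nth [::] F i.

Lemma P_mem i : P i \in F.
Proof. by rewrite /P mem_nth. Qed.

Lemma sum_uniqF (k1 : seq A) (Q : pred (seq A)) (a : R) : k1 \in F ->
  \sum_(i : 'I_N | (P i == k1) && Q (P i)) a = if Q k1 then a else 0.
Proof.
move=> kin.
have i0lt : (index k1 F < N)%N by rewrite index_mem.
pose i0 := Ordinal i0lt.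
rewrite (eq_bigl (fun i => (i == i0) && Q k1)); last first.
  move=> i; apply/idP/idP.
    move=> /andP [/eqP Pk Qk]; apply/andP; split; last by rewrite -Pk.
    apply/eqP; apply: val_inj => /=.
    by rewrite -Pk /P index_uniq // allpaths_uniq.
  move=> /andP [/eqP -> Qk]; by rewrite /P /= nth_index // eqxx.
case: (Q k1); last by rewrite big_pred0 // => i; rewrite andbF.
by rewrite (eq_bigl (pred1 i0)) ?big_pred1_eq // => i; rewrite andbT.
Qed.

Definition fv (v : 'rV[R]_N) : R := (\sum_i v ord0 i) / n%:R.
Definition vdem (v : 'rV[R]_N) (u w : 'I_n) :=
  \sum_(i | (path_src (P i) == Some u) && (path_dst (P i) == Some w)) v ord0 i.
Definition vload (v : 'rV[R]_N) (e : A) := \sum_(i | e \in P i) v ord0 i.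
Definition Kset : set 'rV[R]_N := fun v => (forall i, 0 <= v ord0 i <= c) /\
   (forall u w, vdem v u w = fv v * M u w) /\ (forall e, vload v e <= c).

Lemma K_hosts v : Kset v -> hosts_cap G c (fv v *: M).
Proof.
move=> [box [hd hl]].
exists [seq (P i, v ord0 i) | i <- index_enum 'I_N]; split; [|split].
- move=> k /mapP [i _ ->] /=; split; first exact/allpaths_path/P_mem.
  by case/andP: (box i).
- by move=> u w; rewrite big_map mxE -hd /vdem; apply: eq_big.
- move=> e; rewrite big_map; apply: le_trans (hl e); rewrite /vload.
  by rewrite le_eqVlt; apply/orP; left; apply/eqP; apply: eq_big.
Qed.

Lemma sub_sum (T : eqType) (s : seq T) (a b : pred T) (f : T -> R) :
  (forall k, k \in s -> 0 <= f k) -> (forall k, k \in s -> a k -> b k) ->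
  \sum_(k <- s | a k) f k <= \sum_(k <- s | b k) f k.
Proof.
move=> f0 ab; rewrite [X in X <= _]big_mkcond [X in _ <= X]big_mkcond.
rewrite big_seq [X in _ <= X]big_seq; apply: ler_sum => k ks.
case: ifP => ak; first by rewrite (ab k ks ak).
by case: ifP => // _; exact: f0.
Qed.

Lemma sum_some (a : 'I_n) (f : 'I_n -> R) :
  \sum_(u : 'I_n) (if Some a == Some u then f u else 0) = f a.
Proof.
rewrite (bigD1 a) //= eqxx big1 ?addr0 // => u ua.
by rewrite (_ : (Some a == Some u) = false) //; apply/negbTE; rewrite eq_sym.
Qed.

Lemma path_src_dst (p : seq A) : is_path p -> exists a b, path_src p = Some a /\ path_dst p = Some b.
Proof.
case: p => [[]//|x q _]; rewrite /path_dst last_rev_ohead /=.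
by do 2 eexists; split.
Qed.

Lemma sum_vdem v : \sum_u \sum_w vdem v u w = \sum_i v ord0 i.
Proof.
rewrite /vdem.
transitivity (\sum_u \sum_w \sum_i (if (path_src (P i) == Some u) && (path_dst (P i) == Some w) then v ord0 i else 0)).
  by apply: eq_bigr => u _; apply: eq_bigr => w _; exact: big_mkcond.
under eq_bigr => u _ do rewrite exchange_big.
rewrite exchange_big; apply: eq_bigr => i _.
have [a [b [ha hb]]] := path_src_dst (allpaths_path (P_mem i)).
rewrite ha hb.
transitivity (\sum_u (if Some a == Some u then \sum_w (if Some b == Some w then v ord0 i else 0) else 0)).
  apply: eq_bigr => u _; case: (Some a == Some u) => //=.
  by rewrite big1.
by rewrite sum_some sum_some.
Qed.

Lemma hosts_K t : (0 < n)%N -> \sum_u \sum_w M u w = n%:R ->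
  hosts_cap G c (t *: M) -> exists v, Kset v /\ fv v = t.
Proof.
move=> n0 sumM [fl [Hfl [Hdem Hload]]].
have [fl' [H1 H2 H3]] := flow_reduce Hfl.
pose v : 'rV[R]_N := \row_i \sum_(k <- fl' | k.1 == P i) k.2.
have exch (Q : pred (seq A)) :
    \sum_(i | Q (P i)) v ord0 i = \sum_(k <- fl' | Q k.1) k.2.
  under eq_bigr do rewrite mxE.
  rewrite (exchange_big_dep xpredT) //= big_seq [RHS]big_mkcond [RHS]big_seq.
  apply: eq_bigr => k kin.
  have [uk pk _] := H1 k kin.
  rewrite -(sum_uniqF Q k.2 (allpaths_mem pk uk)).
  by apply: eq_bigl => i; rewrite andbC eq_sym.
have hdem u w : vdem v u w = t * M u w.
  rewrite /vdem; etransitivity.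
    exact: (exch (fun p => (path_src p == Some u) && (path_dst p == Some w))).
  by rewrite -[LHS]/(dem fl' u w) H2 /dem Hdem mxE.
have hload e : vload v e <= load fl e.
  rewrite /vload; have /= -> := exch (fun p => e \in p); exact: H3.
have hfv : fv v = t.
  rewrite /fv -sum_vdem.
  under eq_bigr do under eq_bigr do rewrite hdem.
  under eq_bigr do rewrite -mulr_sumr.
  rewrite -mulr_sumr sumM mulfK //.
  by rewrite pnatr_eq0 -lt0n.
exists v; split => //.
split; last split.
  move=> i; apply/andP; split.
    rewrite mxE big_seq_cond; apply: sumr_ge0 => k /andP [kin _].
    by have [_ _ ->] := H1 k kin.
  have [ne _] := allpaths_path (P_mem i).
  destruct (P i) as [|e0 q] eqn:E; first by [].
  have L : v ord0 i <= load fl' e0.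
    rewrite mxE /load; apply: sub_sum.
      by move=> k kin; have [_ _ ->] := H1 k kin.
    by move=> k _ /eqP ->; rewrite E mem_head.
  by apply: (le_trans L); apply: (le_trans (H3 e0)); exact: (Hload e0).
  by move=> u w; rewrite hfv hdem.
by move=> e; apply: (le_trans (hload e)); exact: (Hload e).
Qed.

Local Open Scope classical_set_scope.

Lemma cont_sum (p : pred 'I_N) (g : 'I_N -> R) :
  continuous (fun v : 'rV[R]_N => \sum_(i | p i) v ord0 i * g i).
Proof.
move=> v0.
suff H : forall s : seq 'I_N, {for v0, continuous (fun v : 'rV[R]_N => \sum_(i <- s | p i) v ord0 i * g i)}.
  exact: H.
elim => [|a s IH].
  rewrite (_ : (fun v : 'rV[R]_N => _) = fun _ => 0); last by apply/funext => v; rewrite big_nil.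
  exact: cst_continuous.
rewrite (_ : (fun v : 'rV[R]_N => _) = fun v => (if p a then v ord0 a * g a else 0) + \sum_(i <- s | p i) v ord0 i * g i); last first.
  by apply/funext => v; rewrite big_cons; case: (p a); rewrite ?add0r.
apply: continuousD => //.
case: (p a); last exact: cst_continuous.
apply: continuousM; first exact: coord_continuous.
exact: cst_continuous.
Qed.

Lemma cont_sum1 (p : pred 'I_N) :
  continuous (fun v : 'rV[R]_N => \sum_(i | p i) v ord0 i).
Proof.
rewrite (_ : (fun v : 'rV[R]_N => _) = (fun v : 'rV[R]_N => \sum_(i | p i) v ord0 i * 1)).
  exact: cont_sum.
by apply/funext => v; apply: eq_bigr => i _; rewrite mulr1.
Qed.

Lemma cont_fvM (a : R) : continuous (fun v : 'rV[R]_N => fv v * a).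
Proof.
rewrite (_ : (fun v : 'rV[R]_N => _) = (fun v : 'rV[R]_N => \sum_(i | true) v ord0 i * ((n%:R)^-1 * a))).
  exact: cont_sum.
by apply/funext => v; rewrite /fv -mulrA mulr_suml.
Qed.

Lemma cont_fv : continuous fv.
Proof.
rewrite (_ : fv = (fun v : 'rV[R]_N => fv v * 1)); first exact: cont_fvM.
by apply/funext => v; rewrite mulr1.
Qed.

Lemma closed_forall {T : topologicalType} {I : Type} (f : I -> set T) :
  (forall i, closed (f i)) -> closed (fun t => forall i, f i t).
Proof.
move=> fcl; rewrite (_ : (fun t => _) = \bigcap_(i in setT) f i); first by apply: closed_bigI.
by apply/funext => t; apply/propext; split => [h i _|h i]; [exact: h|exact: h].
Qed.

Lemma closed_eqf {T : topologicalType} (f g : T -> R) :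
  continuous f -> continuous g -> closed (fun v => f v = g v).
Proof.
move=> cf cg; rewrite (_ : (fun v => _) = (fun v => f v - g v) @^-1` [set x | x = 0]); last first.
  by apply/funext => v; apply/propext; rewrite /preimage /=; split => [->|/eqP]; [rewrite subrr|rewrite subr_eq0 => /eqP].
apply: preimage_closed; last exact: closed_eq.
by move=> x _; apply: continuousB; [exact: cf|exact: cg].
Qed.

Lemma closed_lef {T : topologicalType} (f : T -> R) (b : R) :
  continuous f -> closed (fun v => f v <= b).
Proof.
move=> cf; rewrite (_ : (fun v => _) = f @^-1` [set x | x <= b]) //.
apply: preimage_closed; last exact: closed_le.
by move=> x _; exact: cf.
Qed.

Lemma K_compact : compact Kset.
Proof.
have -> : Kset = [set v : 'rV[R]_N | forall i, (`[0, c]%classic : set R) (v ord0 i)] `&`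
   (fun v => (forall u w, vdem v u w = fv v * M u w) /\ (forall e, vload v e <= c)).
  apply/funext => v; apply/propext; split => [[b h]|[b h]]; split => //.
have cb := @rV_compact R N (fun _ => `[0, c]%classic) (fun _ => @segment_compact R 0 c).
apply: (compact_closedI cb).
apply: closedI.
  apply: closed_forall => u; apply: closed_forall => w; apply: closed_eqf.
    exact: cont_sum1.
  exact: cont_fvM.
apply: closed_forall => e; apply: closed_lef; exact: cont_sum1.
Qed.

Lemma throughput_max t0 : (0 < n)%N -> \sum_u \sum_w M u w = n%:R ->
  hosts_cap G c (t0 *: M) ->
  exists th, (hosts_cap G c (th *: M) /\ forall t, hosts_cap G c (t *: M) -> t <= th) /\ t0 <= th.
Proof.
move=> n0 sM h0.
have [v0 [Kv0 _]] := hosts_K n0 sM h0.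
have [v vK vmax] := @EVT_max_rV R N fv Kset (ex_intro _ v0 Kv0) K_compact (continuous_subspaceT cont_fv).
exists (fv v); split; [split|].
- apply: K_hosts; exact: set_mem vK.
- move=> t /(hosts_K n0 sM) [w [wK <-]]; apply: vmax; exact: mem_set.
- have [w [wK <-]] := hosts_K n0 sM h0; apply: vmax; exact: mem_set.
Qed.
End PartA.

Lemma sum3 (V : Type) (idx : V) (op : Monoid.com_law idx) (I J K : finType) (F : I -> J -> K -> V) :
  \big[op/idx]_(q : I * J * K) F q.1.1 q.1.2 q.2 = \big[op/idx]_i \big[op/idx]_j \big[op/idx]_k F i j k.
Proof. by symmetry; rewrite pair_big (pair_big _ _ (fun p k => F p.1 p.2 k)). Qed.

Section PartB.
Variables (R : realType) (m : nat).
Local Notation n := m.+1.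

Definition validT : pred ('I_n * 'I_n * bool) := fun q => (q.1.1 != q.1.2) || ~~ q.2.
Definition TT := {q : 'I_n * 'I_n * bool | validT q}.
Definition d0 : TT := exist (fun q => validT q) (ord0, ord0, false) (erefl true).
Definition Gr : mgraph n :=
  @MGraph n #|{: TT}| (fun e => ((val (enum_val e)).1.1, (val (enum_val e)).1.2)).
Arguments Gr : simpl never.
Definition mk (q : 'I_n * 'I_n * bool) : arc_t Gr := enum_rank (insubd d0 q).

Lemma arc_mk q : validT q -> arc Gr (mk q) = (q.1.1, q.1.2).
Proof. by move=> vq; rewrite /= /mk enum_rankK insubdK. Qed.

Lemma sval_mk q : validT q -> sval (enum_val (mk q)) = q.
Proof. by move=> vq; rewrite /mk enum_rankK insubdK. Qed.

Lemma mk_eq q e : validT q -> (mk q == e) = (q == val (enum_val e)).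
Proof.
move=> vq; apply/eqP/eqP => [<-|->]; first by rewrite /mk enum_rankK insubdK.
by rewrite /mk valKd enum_valK.
Qed.

Definition pathT (u v w : 'I_n) : seq ('I_n * 'I_n * bool) :=
  if u == w then (if w == v then [:: (u, u, false)] else [:: (w, v, true)])
  else (if w == v then [:: (u, w, false)] else [:: (u, w, false); (w, v, true)]).

Lemma pathT_valid u v w q : q \in pathT u v w -> validT q.
Proof.
rewrite /pathT /validT; case: eqP => [uw|uw]; case: eqP => [wv|wv]; rewrite !inE.
- by move/eqP => ->; rewrite orbT.
- by move/eqP => -> /=; rewrite orbF; apply/eqP.
- by move/eqP => ->; rewrite orbT.
- case/orP => /eqP -> /=; first by rewrite orbT.
  by rewrite orbF; apply/eqP.
Qed.

Lemma memT u v w q : q \in pathT u v w ->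
  if q.2 then (w == q.1.1) && (v == q.1.2) else (u == q.1.1) && (w == q.1.2).
Proof.
rewrite /pathT; case: eqP => [uw|uw]; case: eqP => [wv|wv]; rewrite !inE;
  try (move=> /eqP -> /=; subst; by rewrite !eqxx).
move=> /orP [] /eqP -> /=; by rewrite !eqxx.
Qed.

Definition pathG u v w : seq (arc_t Gr) := map mk (pathT u v w).

Lemma pathG_path u v w : is_path (pathG u v w).
Proof.
split; first by rewrite /pathG /pathT; case: ifP; case: ifP.
rewrite /pathG /pathT; case: ifP => // uw; case: ifP => // wv.
change ((arel (mk (u, w, false)) (mk (w, v, true))) && true).
rewrite andbT /arel !arc_mk //=.
- by rewrite /validT /= wv.
- by rewrite /validT /= uw.
Qed.

Lemma pathG_src u v w : path_src (pathG u v w) = Some u.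
Proof.
rewrite /pathG /pathT /path_src; case: ifP => uw; case: ifP => wv /=;
  rewrite sval_mk //= /validT /= ?eqxx ?wv ?uw //.
by move/eqP: uw => ->.
Qed.

Lemma pathG_dst u v w : path_dst (pathG u v w) = Some v.
Proof.
rewrite /pathG /pathT /path_dst; case: ifP => uw; case: ifP => wv /=;
  rewrite sval_mk //= /validT /= ?eqxx ?wv ?uw //.
- by move/eqP: uw => ->; move/eqP: wv => ->.
- by move/eqP: wv => ->.
Qed.

Lemma card_count (Q : pred ('I_n * 'I_n * bool)) :
  #|[set e : arc_t Gr | Q (sval (enum_val e))]| = (\sum_(q | validT q && Q q) 1)%N.
Proof.
rewrite sum1dep_card.
have -> : #|[set e : arc_t Gr | Q (sval (enum_val e))]| = #|[set p : TT | Q (sval p)]|.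
  rewrite -(@on_card_preimset _ _ (@enum_val TT predT) [set p : TT | Q (sval p)]).
    by apply: eq_card => e; rewrite !inE.
  by apply: onW_bij; exact: enum_val_bij.
rewrite -(card_imset _ val_inj).
apply: eq_card => q; rewrite inE; apply/imsetP/andP => [[p]|[vq Qq]].
  by rewrite inE => Qp ->; split => //; exact: (svalP p).
by exists (exist _ q vq); rewrite ?inE.
Qed.

Lemma sum_if12 (v : 'I_n) : (\sum_(x : 'I_n) (if x == v then 1 else 2) = 2 * n - 1)%N.
Proof.
rewrite (bigD1 v) //= eqxx.
rewrite (eq_bigr (fun _ => 2%N)); last by move=> x /negbTE ->.
rewrite sum_nat_const cardC1 card_ord /=; lia.
Qed.

Lemma count_tail (v : 'I_n) : (\sum_(q | validT q && (q.1.1 == v)) 1 = 2 * n - 1)%N.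
Proof.
rewrite big_mkcond /= (sum3 _ (fun a x b => if validT (a, x, b) && (a == v) then 1 else 0)%N).
rewrite (bigD1 v) //=.
rewrite [X in (_ + X)%N]big1 ?addn0; last first.
  by move=> a av; apply: big1 => x _; apply: big1 => b _; rewrite (negbTE av) andbF.
rewrite -(sum_if12 v); apply: eq_bigr => x _.
rewrite big_bool /validT /= eqxx !andbT orbF orbT eq_sym.
by case: (x == v).
Qed.

Lemma count_head (v : 'I_n) : (\sum_(q | validT q && (q.1.2 == v)) 1 = 2 * n - 1)%N.
Proof.
rewrite big_mkcond /= (sum3 _ (fun a x b => if validT (a, x, b) && (x == v) then 1 else 0)%N).
rewrite exchange_big /= (bigD1 v) //=.
rewrite [X in (_ + X)%N]big1 ?addn0; last first.
  by move=> a av; apply: big1 => x _; apply: big1 => b _; rewrite (negbTE av) andbF.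
rewrite -(sum_if12 v); apply: eq_bigr => x _.
rewrite big_bool /validT /= eqxx !andbT orbF orbT.
by case: (x == v).
Qed.

Lemma Gr_reg : dregular Gr (2 * n - 1).
Proof.
move=> v; split.
  etransitivity; first exact: (card_count (fun q => q.1.1 == v)).
  exact: count_tail.
etransitivity; first exact: (card_count (fun q => q.1.2 == v)).
exact: count_head.
Qed.

Lemma sum_pick (F : 'I_n -> R) u : \sum_a (if a == u then F a else 0) = F u.
Proof. by rewrite -big_mkcond big_pred1_eq. Qed.

Lemma sum_pickw (z : 'I_n) (B : bool) (X : R) :
  \sum_(w : 'I_n) (if (w == z) && B then X else 0) = if B then X else 0.
Proof. by case: B; [under eq_bigr do rewrite andbT; exact: sum_pick | rewrite big1 // => w _; rewrite andbF]. Qed.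

Lemma sum_pickw' (z : 'I_n) (B : bool) (X : R) :
  \sum_(w : 'I_n) (if B && (w == z) then X else 0) = if B then X else 0.
Proof. by rewrite -(sum_pickw z); apply: eq_bigr => w _; rewrite andbC. Qed.

Lemma sum_ifc (A0 : bool) (Y : 'I_n -> R) :
  \sum_x (if A0 then Y x else 0) = if A0 then \sum_x Y x else 0.
Proof. by case: A0 => //; rewrite big1. Qed.

Lemma pick2 (g : 'I_n -> 'I_n -> R) u v :
  \sum_a \sum_x (if (a == u) && (x == v) then g a x else 0) = g u v.
Proof.
under eq_bigr => a _ do under eq_bigr => x _ do rewrite andbC.
Abort.

Lemma pick2 (g : 'I_n -> 'I_n -> R) u v :
  \sum_a \sum_x (if (a == u) && (x == v) then g a x else 0) = g u v.
Proof.
rewrite (bigD1 u) //= [X in _ + X]big1 ?addr0; last first.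
  by move=> a /negbTE au; apply: big1 => x _; rewrite au.
rewrite (bigD1 v) //= !eqxx [X in _ + X]big1 ?addr0 //.
by move=> x /negbTE ->; rewrite andbF.
Qed.

Variable M : 'M[R]_n.
Hypothesis DS : doubly_stochastic M.

Definition cc : R := ((2 * n - 1)%N%:R)^-1.

Definition flG : seq (seq (arc_t Gr) * R) :=
  [seq (pathG p.1.1 p.1.2 p.2, cc * M p.1.1 p.1.2) | p <- index_enum ('I_n * 'I_n * 'I_n)%type].

Lemma cc_ge0 : 0 <= cc.
Proof. by rewrite /cc invr_ge0 ler0n. Qed.

Lemma Gr_hosts : hosts_cap Gr cc ((n%:R / (2 * n - 1)%N%:R) *: M).
Proof.
have [M0 [Mr Mc]] := DS.
exists flG; split; [|split].
- move=> k /mapP [p _ ->] /=; split; first exact: pathG_path.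
  by apply: mulr_ge0; [exact: cc_ge0|exact: M0].
- move=> u v; rewrite big_map mxE.
  rewrite (eq_bigl (fun p => (p.1.1 == u) && (p.1.2 == v))); last first.
    by move=> p; rewrite /= pathG_src pathG_dst.
  rewrite big_mkcond /=.
  rewrite (sum3 _ (fun a x w => if (a == u) && (x == v) then cc * M a x else 0)).
  under eq_bigr => a _ do under eq_bigr => x _ do rewrite sumr_const card_ord.
  under eq_bigr => a _ do rewrite sumrMnl.
  rewrite sumrMnl pick2.
  by rewrite -mulr_natr /cc; ring.
- move=> e; rewrite big_map.
  case E: (sval (enum_val e)) => [[a0 x0] b0].
  pose C (p : 'I_n * 'I_n * 'I_n) :=
    if b0 then (p.2 == a0) && (p.1.2 == x0) else (p.1.1 == a0) && (p.2 == x0).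
  have memc p : e \in pathG p.1.1 p.1.2 p.2 -> C p.
    move=> /mapP [q' q'in eq].
    have vq' := pathT_valid q'in.
    have /eqP qq : q' == sval (enum_val e) by rewrite -mk_eq // eq.
    rewrite E in qq; subst q'.
    exact: (memT q'in).
  apply: (le_trans (sub_sum (s := index_enum ('I_n * 'I_n * 'I_n)%type)
            (a := fun p => e \in pathG p.1.1 p.1.2 p.2) (b := C)
            (f := fun p => cc * M p.1.1 p.1.2) _ _)).
  + by move=> p _; apply: mulr_ge0; [exact: cc_ge0|exact: M0].
  + by move=> p _; exact: memc.
  rewrite /C; case: b0 {E memc C}.
  + rewrite big_mkcond (sum3 _ (fun a x w => if (w == a0) && (x == x0) then cc * M a x else 0)).
    under eq_bigr => a _ do under eq_bigr => x _ do rewrite sum_pickw.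
    under eq_bigr => a _ do rewrite sum_pick.
    by rewrite -mulr_sumr Mc mulr1.
  + rewrite big_mkcond (sum3 _ (fun a x w => if (a == a0) && (w == x0) then cc * M a x else 0)).
    under eq_bigr => a _ do under eq_bigr => x _ do rewrite sum_pickw'.
    under eq_bigr => a _ do rewrite sum_ifc.
    by rewrite sum_pick -mulr_sumr Mr mulr1.
Qed.
End PartB.

Theorem mainTheorem5 (R : realType) (n : nat) (M : 'M[R]_n) (kappa : R) :
  (1 <= n)%N ->
  doubly_stochastic M ->
  kappa <= n%:R / (2 * n - 1)%N%:R ->
  exists G : mgraph n,
    dregular G (2 * n - 1) /\
    exists theta : R, is_throughput G M theta /\ kappa <= theta.
Proof.
case: n M kappa => [//|m] M kappa _ DS hk.
exists (Gr m); split; first exact: Gr_reg.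
have sM : \sum_u \sum_w M u w = m.+1%:R.
  have [_ [Mr _]] := DS.
  under eq_bigr do rewrite Mr.
  by rewrite sumr_const card_ord.
have [th [[h1 h2] h3]] := throughput_max (ltn0Sn m) sM (Gr_hosts DS).
exists th; split; first by split.
exact: le_trans hk h3.
Qed.
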